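(* In the setting of the context, assume $\Pi^\rho_0=\{\mathbf{0}\}$ and that Condition I holds ($ZR^i\in L^1$ for all $i\in\{1,\dots,d\}$ and all $Z\in\mathcal{Q}$). If $\mathcal{Q}\cap\mathcal{M}=\emptyset$, then the market admits $\rho$-arbitrage.
   Context: Let $(\Omega,\mathcal{F},\mathbb{P})$ be a probability space and a market: riskless asset $S^0_0=1$, $S^0_1=1+r$, $r>-1$; risky assets $S^1,\dots,S^d$ with constants $S^i_0>0$ and real-valued $\mathcal{F}$-measurable $S^i_1$; returns $R^i:=(S^i_1-S^i_0)/S^i_0$. Standing assumptions: nonredundancy (if $\theta\in\mathbb{R}^{1+d}$ with $\sum_{i=0}^d\theta^iS^i_t=0$ a.s. for $t\in\{0,1\}$ then $\theta=0$), $R^i\in L^1$, $\mathbb{E}[R^i]\ne r$ for some $i$. Excess return: $X_\pi:=\pi\cdot(R-r\mathbf{1})$; $\Pi_0:=\{\pi:\mathbb{E}[X_\pi]=0\}$. $L$ is a Riesz space with $L^\infty\subset L\subset L^1$ containing all $X_\pi$. $\mathcal{D}:=\{Z\in L^1:Z\ge0,\mathbb{E}[Z]=1\}$; $\mathcal{Q}\subset\mathcal{D}$ is convex with $1\in\mathcal{Q}$ and $\rho(X)=\sup_{Z\in\mathcal{Q}}\mathbb{E}[-ZX]$ on $L$, with $\mathbb{E}[-ZX]:=\mathbb{E}[ZX^-]-\mathbb{E}[ZX^+]$ and $\mathbb{E}[-ZX]=\infty$ if $\mathbb{E}[ZX^-]=\infty$. $\Pi^\rho_0$ is the set of $\pi\in\Pi_0$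 with $\rho(X_\pi)<\infty$ and $\rho(X_\pi)\le\rho(X_{\pi'})$ for all $\pi'\in\Pi_0$. $\mathcal{M}:=\{Z\in\mathcal{D}:\mathbb{E}[Z(R^i-r)]=0\ \forall i\}$. $\pi$ is $\rho$-efficient if $\mathbb{E}[X_\pi]\ge0$ and no $\pi'$ has $\mathbb{E}[X_{\pi'}]\ge\mathbb{E}[X_\pi]$, $\rho(X_{\pi'})\le\rho(X_\pi)$ with one inequality strict; $\rho$-arbitrage means no $\rho$-efficient portfolio exists. *)

(* Defs.v *)
From HB Require Import structures.
From mathcomp Require Import all_boot all_order all_algebra.
From mathcomp Require Import all_classical all_reals all_analysis.
Set Implicit Arguments. Unset Strict Implicit. Unset Printing Implicit Defensive.
Import Order.TTheory GRing.Theory Num.Theory.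
Local Open Scope classical_set_scope.
Local Open Scope ring_scope.

Section Market.
Context {R : realType} {dT : measure_display} {T : measurableType dT}.
Context (P : probability T R) (d : nat).

Definition L1 : set (T -> R) :=
  [set f : T -> R | measurable_fun setT f /\ P.-integrable setT (EFin \o f)].
Definition Linf : set (T -> R) :=
  [set f : T -> R | measurable_fun setT f /\ exists M : R, {ae P, forall x, `|f x| <= M}].

(* a Riesz subspace of R^T: vector subspace closed under |.|
   (hence under pointwise max/min) *)
Definition riesz_subspace (L : set (T -> R)) : Prop :=
  [/\ L (fun _ => 0),
      (forall f g, L f -> L g -> L (fun x => f x + g x)),
      (forall (a : R) f, L f -> L (fun x => a * f x)) &
      (forall f, L f -> L (fun x => `|f x|))].

Definition Ex (f : T -> R) : \bar R := (\int[P]_x (f x)%:E)%E.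

Definition ret (S0 : 'I_d -> R) (S1 : 'I_d -> T -> R) (i : 'I_d) : T -> R :=
  fun x => (S1 i x - S0 i) / S0 i.

Definition Xpi (r : R) (S0 : 'I_d -> R) (S1 : 'I_d -> T -> R)
    (pi : 'I_d -> R) : T -> R :=
  fun x => \sum_(i < d) pi i * (ret S0 S1 i x - r).

Definition market_assumptions (r : R) (S0 : 'I_d -> R)
    (S1 : 'I_d -> T -> R) : Prop :=
  [/\ -1 < r,
      (forall i, 0 < S0 i) /\ (forall i, measurable_fun setT (S1 i)),
      (* nonredundancy *)
      (forall (th0 : R) (th : 'I_d -> R),
          th0 * 1 + \sum_(i < d) th i * S0 i = 0 ->
          {ae P, forall x, th0 * (1 + r) + \sum_(i < d) th i * S1 i x = 0} ->
          th0 = 0 /\ forall i, th i = 0),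
      (forall i, L1 (ret S0 S1 i)) &
      (exists i, Ex (ret S0 S1 i) <> r%:E)].

Definition Dset : set (T -> R) :=
  [set Z | L1 Z /\ {ae P, forall x, 0 <= Z x} /\ Ex Z = 1%E].

Definition convex_set_fun (Q : set (T -> R)) : Prop :=
  forall Z1 Z2 (l : R), Q Z1 -> Q Z2 -> 0 <= l -> l <= 1 ->
    Q (fun x => l * Z1 x + (1 - l) * Z2 x).

Definition Eneg (Z X : T -> R) : \bar R :=
  let a := (\int[P]_x (Z x * Num.max (- X x) 0)%:E)%E in
  let b := (\int[P]_x (Z x * Num.max (X x) 0)%:E)%E in
  if a == +oo%E then +oo%E else (a - b)%E.

Definition rho (Q : set (T -> R)) (X : T -> R) : \bar R :=
  ereal_sup [set Eneg Z X | Z in Q].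

Definition Pi0 r S0 S1 : set ('I_d -> R) :=
  [set pi | Ex (Xpi r S0 S1 pi) = 0%E].

Definition Pi0_rho Q r S0 S1 : set ('I_d -> R) :=
  [set pi | Pi0 r S0 S1 pi /\ (rho Q (Xpi r S0 S1 pi) < +oo)%E /\
     forall pi', Pi0 r S0 S1 pi' ->
       (rho Q (Xpi r S0 S1 pi) <= rho Q (Xpi r S0 S1 pi'))%E].

Definition Mset r S0 S1 : set (T -> R) :=
  [set Z | Dset Z /\ forall i,
     L1 (fun x => Z x * (ret S0 S1 i x - r)) /\
     Ex (fun x => Z x * (ret S0 S1 i x - r)) = 0%E].

Definition condition_I Q S0 S1 : Prop :=
  forall Z i, Q Z -> L1 (fun x => Z x * ret S0 S1 i x).

Definition rho_efficient Q r S0 S1 (pi : 'I_d -> R) : Prop :=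
  (0 <= Ex (Xpi r S0 S1 pi))%E /\
  ~ exists pi',
      (Ex (Xpi r S0 S1 pi) <= Ex (Xpi r S0 S1 pi'))%E /\
      (rho Q (Xpi r S0 S1 pi') <= rho Q (Xpi r S0 S1 pi))%E /\
      ((Ex (Xpi r S0 S1 pi) < Ex (Xpi r S0 S1 pi'))%E \/
       (rho Q (Xpi r S0 S1 pi') < rho Q (Xpi r S0 S1 pi))%E).

Definition rho_arbitrage Q r S0 S1 : Prop :=
  ~ exists pi, rho_efficient Q r S0 S1 pi.

End Market.

(* Main.v *)
Require Import Defs.
From HB Require Import structures.
From mathcomp Require Import all_boot all_order all_algebra.
From mathcomp Require Import all_classical all_reals all_analysis.
From mathcomp Require Import measurable_realfun lra ring.
Import Order.TTheory GRing.Theory Num.Theory.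
Set Implicit Arguments. Unset Strict Implicit. Unset Printing Implicit Defensive.
Local Open Scope classical_set_scope.
Local Open Scope ring_scope.

Section Sep.
Context {R : realType}.

Definition Gs (n : nat) (g x : nat -> R) := \sum_(i < n) g i * x i.

Lemma GsL n g x y (a b : R) :
  Gs n g (fun i => a * x i + b * y i) = a * Gs n g x + b * Gs n g y.
Proof.
rewrite /Gs !mulr_sumr -big_split /=; apply: eq_bigr => i _; lra.
Qed.

Lemma Gs0 n x : Gs n (fun _ => 0) x = 0.
Proof. by rewrite /Gs big1 // => i _; rewrite mul0r. Qed.

Lemma sep_cone (n : nat) (K : set (nat -> R)) :
 (forall x y, K x -> K y -> K (fun i => x i + y i)) ->
 (forall (t : R) x, 0 < t -> K x -> K (fun i => t * x i)) ->
 (forall x, K x -> exists2 i, (i < n)%N & x i != 0) ->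
 exists f : nat -> R, (forall x, K x -> 0 <= Gs n f x) /\
   (forall x, K x -> exists2 i, (i < n)%N & f i != 0).
Proof.
elim: n K => [|n IH] K Kadd Kscale K0.
  exists (fun _ => 0); split => x Kx; have [i] := K0 x Kx; by [].
have GsS g x : Gs n.+1 g x = Gs n g x + g n * x n.
  by rewrite /Gs big_ord_recr.
have Gsif g a x : Gs n (fun i => if i == n then a else g i) x = Gs n g x.
  by apply: eq_bigr => i _; rewrite ltn_eqF.
have [neg|] := pselect (exists v, K v /\ v n < 0); last first.
  move=> nneg; exists (fun i => if i == n then 1 else 0); split.
    move=> y Ky; rewrite GsS eqxx Gsif Gs0 add0r mul1r.
    rewrite leNgt; apply/negP => xn; apply: nneg; by exists y.
  by move=> x _; exists n => //; rewrite eqxx oner_neq0.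
have [pos|] := pselect (exists u, K u /\ 0 < u n); last first.
  move=> npos; exists (fun i => if i == n then -1 else 0); split.
    move=> x Kx; rewrite GsS eqxx Gsif Gs0 add0r.
    have : ~ 0 < x n by move=> xn; apply: npos; exists x.
    move/negP; rewrite -leNgt => ?; lra.
  by move=> x _; exists n => //; rewrite eqxx oppr_eq0 oner_neq0.
case: neg => v [Kv vn]; case: pos => u [Ku un].
pose K' := [set x | K x /\ x n = 0].
have [g [g0 gnz]] : exists g : nat -> R, (forall x, K' x -> 0 <= Gs n g x) /\
   (forall x, K' x -> exists2 i, (i < n)%N & g i != 0).
  apply: IH.
  - move=> x y [Kx xn] [Ky yn]; split; [exact: Kadd|by rewrite xn yn addr0].
  - move=> t x t0 [Kx xn]; split; [exact: Kscale|by rewrite xn mulr0].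
  - move=> x [Kx xn]; have [i ilt xi] := K0 x Kx; exists i => //.
    rewrite ltn_neqAle -ltnS ilt andbT; apply/eqP => ein; move: xi.
    by rewrite ein xn eqxx.
have key k k' : K k -> 0 < k n -> K k' -> k' n < 0 ->
    - Gs n g k / k n <= Gs n g k' / (- k' n).
  move=> Kk kn Kk' k'n.
  have : K' (fun i => (k n)^-1 * k i + (- k' n)^-1 * k' i).
    split; first by apply: Kadd; apply: Kscale => //; rewrite invr_gt0; lra.
    rewrite mulVf ?gt_eqF // invrN mulNr mulVf ?lt_eqF //; lra.
  move/g0; rewrite GsL => h.
  rewrite mulNr -subr_ge0 opprK; move: h; rewrite [_^-1 * _]mulrC [(- _)^-1 * _]mulrC.
  by rewrite addrC.
pose A := [set - Gs n g k / k n | k in [set k | K k /\ 0 < k n]].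
have supA : has_sup A.
  split; first by exists (- Gs n g u / u n); exists u.
  exists (Gs n g v / (- v n)) => _ [k [Kk kn] <-]; exact: key.
pose a := sup A.
exists (fun i => if i == n then a else g i); split; last first.
  move=> x _.
  have : K' (fun i => (u n)^-1 * u i + (- v n)^-1 * v i).
    split; first by apply: Kadd; apply: Kscale => //; rewrite invr_gt0; lra.
    rewrite mulVf ?gt_eqF // invrN mulNr mulVf ?lt_eqF //; lra.
  move/gnz => [i ilt gi]; exists i; first exact: ltnW.
  by rewrite ltn_eqF.
move=> k Kk; rewrite GsS eqxx Gsif.
have [kn|kn|kn] := ltgtP (k n) 0.
- have : a <= Gs n g k / (- k n).
    apply: ge_sup; first by exists (- Gs n g u / u n); exists u.
    by move=> _ [k' [Kk' k'n] <-]; exact: key.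
  rewrite ler_pdivlMr; last lra.
  move=> h; nra.
- have : - Gs n g k / k n <= a.
    by apply: sup_upper_bound => //; exists k.
  rewrite ler_pdivrMr // => h; nra.
- by rewrite kn mulr0 addr0; apply: g0.
Qed.

End Sep.

Section Meas.
Context {R : realType} {dT : measure_display} {T : measurableType dT}.
Context (P : probability T R).

Lemma Ex_fin f : P.-integrable setT (EFin \o f) -> Ex P f = (fine (Ex P f))%:E.
Proof. by move=> hf; rewrite fineK //; exact: integrable_fin_num. Qed.

Lemma Ex_lin (n : nat) (h : 'I_n -> T -> R) (c : 'I_n -> R) :
  (forall i, P.-integrable setT (EFin \o h i)) ->
  P.-integrable setT (EFin \o (fun x => \sum_(i < n) c i * h i x)) /\
  Ex P (fun x => \sum_(i < n) c i * h i x) =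
    (\sum_(i < n) c i * fine (Ex P (h i)))%:E.
Proof.
move=> hi.
have eq : (EFin \o fun x => \sum_(i < n) c i * h i x) =
    (fun x => \sum_(i < n) ((c i)%:E * (h i x)%:E))%E.
  by apply/funext => x; rewrite /= -sumEFin; apply: eq_bigr => i _; rewrite EFinM.
have hi' : forall i, P.-integrable setT (fun x => ((c i)%:E * (h i x)%:E)%E).
  by move=> i; apply: integrableZl => //; exact: hi.
split; first by rewrite eq; apply: integrable_sum => // i _; exact: hi'.
rewrite /Ex -[X in (\int[P]_x X x)%E]/(EFin \o _) eq integral_sum //.
rewrite -sumEFin; apply: eq_bigr => i _.
rewrite integralZl //; last exact: hi.
rewrite EFinM; congr (_ * _)%E; exact: (Ex_fin (hi i)).
Qed.

Lemma Ex_lin2 (a b : R) f g :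
  P.-integrable setT (EFin \o f) -> P.-integrable setT (EFin \o g) ->
  P.-integrable setT (EFin \o (fun x => a * f x + b * g x)) /\
  fine (Ex P (fun x => a * f x + b * g x)) = a * fine (Ex P f) + b * fine (Ex P g).
Proof.
move=> hf hg.
have eq : (EFin \o (fun x => a * f x + b * g x)) =
   ((fun x => a%:E * (f x)%:E) \+ (fun x => b%:E * (g x)%:E))%E.
  by apply/funext => x; rewrite /= EFinD !EFinM.
have ha : P.-integrable setT (fun x => a%:E * (f x)%:E)%E by exact: integrableZl.
have hb : P.-integrable setT (fun x => b%:E * (g x)%:E)%E by exact: integrableZl.
split; first by rewrite eq; exact: integrableD.
rewrite /Ex -[X in (\int[P]_x X x)%E]/(EFin \o _) eq integralD //.
rewrite !integralZl // -!/(Ex P _) (Ex_fin hf) (Ex_fin hg) -!EFinM -EFinD.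
by [].
Qed.

Lemma mr (x y : R) : x <= y -> Num.max x y = y.
Proof. rewrite /Order.max; case: ifP => // /negbT; rewrite -leNgt => *; lra. Qed.
Lemma ml (x y : R) : y <= x -> Num.max x y = x.
Proof. rewrite /Order.max; case: ifP => // h *; lra. Qed.

Lemma abs_maxr (y : R) : `|Num.max y 0| <= `|y|.
Proof.
have [h|h] := boolP (y <= 0); first by rewrite mr // normr0.
by rewrite ml //; move: h; rewrite -ltNge => /ltW.
Qed.

Lemma Eneg_lin (Z X : T -> R) :
  measurable_fun setT Z -> measurable_fun setT X ->
  P.-integrable setT (EFin \o (fun x => Z x * X x)) ->
  Eneg P Z X = (- Ex P (fun x => (Z x * X x)%R))%E.
Proof.
move=> mZ mX hZX.
have h1 : P.-integrable setT (EFin \o (fun x => Z x * Num.max (- X x) 0)).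
  apply: le_integrable hZX => //.
    by apply/measurable_EFinP; apply: measurable_funM mZ (measurable_funrneg mX).
  move=> x _ /=; rewrite lee_fin !normrM ler_wpM2l //.
  by rewrite -(normrN (X x)); apply: abs_maxr.
have h2 : P.-integrable setT (EFin \o (fun x => Z x * Num.max (X x) 0)).
  apply: le_integrable hZX => //.
    by apply/measurable_EFinP; apply: measurable_funM mZ (measurable_funrpos mX).
  move=> x _ /=; rewrite lee_fin !normrM ler_wpM2l //.
  by apply: abs_maxr.
rewrite /Eneg -/(Ex P (fun x => Z x * Num.max (- X x) 0)).
rewrite -/(Ex P (fun x => Z x * Num.max (X x) 0)).
rewrite (Ex_fin h1) (Ex_fin h2) (Ex_fin hZX) /=.
have e1 := (Ex_lin2 1 (-1) h1 h2).2.
have e2 := (Ex_lin2 (-1) 0 hZX hZX).2.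
have fe : (fun x => 1 * (Z x * Num.max (- X x) 0) + -1 * (Z x * Num.max (X x) 0))
   = (fun x => -1 * (Z x * X x) + 0 * (Z x * X x)).
  apply/funext => x; have [h|h] := boolP (X x <= 0).
    by rewrite (mr h) ml ?oppr_ge0 //; ring.
  move: h; rewrite -ltNge => h.
  rewrite (ml (ltW h)) mr; last by rewrite oppr_le0 ltW.
  ring.
rewrite fe e2 in e1.
rewrite -EFinD; congr (_%:E); lra.
Qed.
End Meas.

Unset Implicit Arguments.
Unset Strict Implicit.

Theorem proposition4p19 (R : realType) (dT : measure_display)
  (T : measurableType dT) (P : probability T R) (d : nat)
  (r : R) (S0 : 'I_d -> R) (S1 : 'I_d -> T -> R)
  (L Q : set (T -> R)) :
  market_assumptions P r S0 S1 ->
  riesz_subspace L -> Linf P `<=` L -> L `<=` L1 P ->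
  (forall pi, L (Xpi r S0 S1 pi)) ->
  Q `<=` Dset P -> convex_set_fun Q -> Q (fun _ => 1) ->
  Pi0_rho P Q r S0 S1 = [set (fun _ => 0)] ->
  condition_I P Q S0 S1 ->
  Q `&` Mset P r S0 S1 = set0 ->
  rho_arbitrage P Q r S0 S1.
Proof.
move=> [r1 [S0pos mS1] nonred retL1 exret] Lr LinfL LL1 XL QD Qconv Q1 Pi0eq condI QM.
pose Y (i : 'I_d) (Z : T -> R) := fun x => Z x * (ret S0 S1 i x - r).
pose phi i Z := fine (Ex P (Y i Z)).
have QL1 Z : Q Z -> L1 P Z by move=> /QD [].
have intY Z : Q Z -> forall i, P.-integrable setT (EFin \o Y i Z).
  move=> QZ i.
  have := (Ex_lin2 1 (-r) (condI Z i QZ).2 (QL1 Z QZ).2).1.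
  have -> : (fun x => 1 * (Z x * ret S0 S1 i x) + - r * Z x) = Y i Z.
    by apply/funext => x; rewrite /Y; ring.
  by [].
pose psi (pi : 'I_d -> R) Z := \sum_(i < d) pi i * phi i Z.
have ZX Z : Q Z -> forall pi,
    P.-integrable setT (EFin \o (fun x => Z x * Xpi r S0 S1 pi x)) /\
    Ex P (fun x => Z x * Xpi r S0 S1 pi x) = (psi pi Z)%:E.
  move=> QZ pi.
  have -> : (fun x => Z x * Xpi r S0 S1 pi x) =
      (fun x => \sum_(i < d) pi i * Y i Z x).
    apply/funext => x; rewrite /Xpi mulr_sumr; apply: eq_bigr => i _.
    rewrite /Y; ring.
  exact: Ex_lin (intY Z QZ).
have EnegE Z : Q Z -> forall pi, Eneg P Z (Xpi r S0 S1 pi) = (- psi pi Z)%:E.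
  move=> QZ pi; rewrite Eneg_lin.
  - by rewrite (ZX Z QZ pi).2.
  - exact: (QL1 Z QZ).1.
  - exact: (LL1 _ (XL pi)).1.
  - exact: (ZX Z QZ pi).1.
have ExE pi : Ex P (Xpi r S0 S1 pi) = (psi pi (fun _ => 1))%:E.
  rewrite -(ZX _ Q1 pi).2; congr (Ex P _); apply/funext => x; by rewrite mul1r.
have rho_le pi (c : \bar R) : (forall Z, Q Z -> ((- psi pi Z)%:E <= c)%E) ->
    (rho P Q (Xpi r S0 S1 pi) <= c)%E.
  move=> h; apply: ge_ereal_sup => _ [Z QZ <-]; rewrite EnegE //; exact: h.
have rho_ge pi Z : Q Z -> ((- psi pi Z)%:E <= rho P Q (Xpi r S0 S1 pi))%E.
  move=> QZ; apply: ereal_sup_ubound; exists Z => //; exact: EnegE.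
have psiD pi1 pi2 Z : psi (fun i => pi1 i + pi2 i) Z = psi pi1 Z + psi pi2 Z.
  by rewrite /psi -big_split; apply: eq_bigr => i _; rewrite mulrDl.
have phiconv Z1 Z2 (l : R) i : Q Z1 -> Q Z2 ->
    phi i (fun x => l * Z1 x + (1 - l) * Z2 x) = l * phi i Z1 + (1 - l) * phi i Z2.
  move=> Q1' Q2'; rewrite /phi -(Ex_lin2 l (1 - l) (intY _ Q1' i) (intY _ Q2' i)).2.
  congr (fine (Ex P _)); apply/funext => x; rewrite /Y; ring.
pose K := [set x : nat -> R | exists t Z, 0 < t /\ Q Z /\
   forall i : 'I_d, x i = t * phi i Z].
have Kadd : forall x y, K x -> K y -> K (fun i => x i + y i).
  move=> x y [t1 [Z1 [t10 [QZ1 hx]]]] [t2 [Z2 [t20 [QZ2 hy]]]].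
  pose s := t1 + t2; pose l := t1 / s.
  have s0 : 0 < s by rewrite /s; lra.
  have sl : s * l = t1 by rewrite /l mulrC divfK // gt_eqF.
  exists s, (fun x => l * Z1 x + (1 - l) * Z2 x); split => //; split.
    apply: Qconv => //; first by rewrite /l divr_ge0 // ltW.
    by rewrite /l ler_pdivrMr // mul1r /s; lra.
  move=> i; rewrite hx hy phiconv // /l /s; field; rewrite /s in s0; apply/negP => /eqP h; lra.
have Kscale : forall (t : R) x, 0 < t -> K x -> K (fun i => t * x i).
  move=> t x t0 [t1 [Z1 [t10 [QZ1 hx]]]]; exists (t * t1), Z1; split.
    exact: mulr_gt0.
  by split => // i; rewrite hx mulrA.
have K0 : forall x, K x -> exists2 i, (i < d)%N & x i != 0.
  move=> x [t [Z [t0 [QZ hx]]]].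
  apply: contrapT => hno; rewrite -subset0 in QM; apply: (QM Z); split => //.
  split; first exact: QD.
  move=> i; have : x i = 0.
    apply/eqP; apply: contrapT => /negP xi; apply: hno; by exists i.
  rewrite hx => /eqP; rewrite mulf_eq0 gt_eqF //= => /eqP ph0.
  split; last by rewrite (Ex_fin (intY Z QZ i)) -/(phi i Z) ph0.
  split; last exact: intY.
  by apply/measurable_EFinP; exact: measurable_int (intY Z QZ i).
have [f [f0 fnz]] := sep_cone Kadd Kscale K0.
pose pi := fun i : 'I_d => f i.
pose xZ Z := fun j => oapp (fun i : 'I_d => phi i Z) 0 (insub j).
have xZE Z (i : 'I_d) : xZ Z i = phi i Z by rewrite /xZ valK.
have KxZ Z : Q Z -> K (xZ Z).
  by move=> QZ; exists 1, Z; split => //; split => // i; rewrite xZE mul1r.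
have psi_ge Z : Q Z -> 0 <= psi pi Z.
  move=> QZ; have := f0 _ (KxZ Z QZ); rewrite /Gs /psi.
  by under eq_bigr do rewrite xZE.
have [i0 i0lt fi0] := fnz _ (KxZ _ Q1).
have rho0 : (rho P Q (Xpi r S0 S1 pi) <= 0%:E)%E.
  apply: rho_le => Z QZ; rewrite lee_fin oppr_le0; exact: psi_ge.
have Epos : 0 < psi pi (fun _ => 1).
  rewrite lt_def psi_ge // andbT; apply/negP => /eqP e0.
  have : Pi0_rho P Q r S0 S1 pi.
    split; first by rewrite /Pi0 /= ExE e0.
    split; first exact: le_lt_trans rho0 (ltey _).
    move=> pi' Hpi'; apply: le_trans rho0 _.
    have : psi pi' (fun _ => 1) = 0.
      by move: Hpi'; rewrite /Pi0 /= ExE => -[].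
    move=> e'; have := rho_ge pi' _ Q1; rewrite e' oppr0; exact.
  rewrite Pi0eq => /= hpi.
  have : pi (Ordinal i0lt) = 0 by rewrite hpi.
  by rewrite /pi /= => /eqP; rewrite (negbTE fi0).
move=> [pi0 [E0 noimp]]; apply: noimp.
exists (fun i => pi0 i + pi i); split.
  rewrite !ExE psiD lee_fin lerDl; exact: ltW.
split; last by left; rewrite !ExE psiD lte_fin ltrDl.
apply: rho_le => Z QZ; rewrite psiD; apply: le_trans (rho_ge pi0 Z QZ).
rewrite lee_fin lerN2 lerDl; exact: psi_ge.
Qed.
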